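(* There exists a separable scattered compact Hausdorff space $X$ such that (a) the scattered height of $X$ equals $3$; (b) $X$ is a $\Delta$-space; (c) $X$ is not an Eberlein compact space. (For instance, the one-point compactification of the Isbell–Mrówka space $\Psi(\mathcal A)$ for any uncountable almost disjoint family $\mathcal A$ of subsets of $\mathbb N$.)
   Context: Scattered height: for a scattered space $X$ (every nonempty subset has a relatively isolated point), with $X^{(0)}=X$, $X^{(\alpha+1)}$ the set of non-isolated points of $X^{(\alpha)}$, and intersections at limit stages, $ht(X)$ is the least $\alpha$ with $X^{(\alpha)}=\emptyset$. An Eberlein compact is a compact space homeomorphic to a weakly compact subset of a Banach space (with the weak topology). For an almost disjoint family $\mathcal A$ of infinite subsets of $\mathbb N$, $\Psi(\mathcal A)=\mathbb N\cup\mathcal A$ where points of $\mathbb N$ are isolated and a neighbourhood base at $A\in\mathcal A$ consists of sets $\{A\}\cup B$ with $B\subseteq A$, $A\setminus B$ finite. A topological space $X$ is a $\Delta$-space if for every decreasing sequence $\{D_n:n\in\omega\}$ of subsets of $X$ with $\bigcap_n D_n=\emptyset$ there is a decreasing sequence $\{V_n:n\in\omega\}$ of open subsets of $X$ with $D_n\subseteq V_n$ for all $n$ and $\bigcap_n V_n=\emptyset$. *)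

(* Defs.v *)
From HB Require Import structures.
From mathcomp Require Import all_boot all_order all_algebra.
From mathcomp Require Import all_classical all_reals all_analysis.
From mathcomp Require Import Rstruct Rstruct_topology.
Set Implicit Arguments. Unset Strict Implicit. Unset Printing Implicit Defensive.
Import Order.TTheory GRing.Theory Num.Theory.
Import numFieldNormedType.Exports.
Local Open Scope classical_set_scope.
Local Open Scope ring_scope.

Definition isolated_in (X : topologicalType) (A : set X) (x : X) : Prop :=
  A x /\ exists U : set X, open U /\ U `&` A = [set x].

Definition scattered (X : topologicalType) : Prop :=
  forall A : set X, A !=set0 -> exists x, isolated_in A x.

Definition derived (X : topologicalType) (A : set X) : set X :=
  [set x | A x /\ ~ isolated_in A x].

Fixpoint cb_deriv (X : topologicalType) (n : nat) : set X :=
  match n with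
  | O => setT
  | S m => derived (@cb_deriv X m)
  end.

(* ht(X) = n for a finite n: n is the least (ordinal) alpha with X^(alpha) = 0;
   the ordinals below a finite n are exactly 0, ..., n-1. *)
Definition scattered_height_eq (X : topologicalType) (n : nat) : Prop :=
  @cb_deriv X n = set0 /\ (forall m, (m < n)%N -> @cb_deriv X m <> set0).

Definition separable (X : topologicalType) : Prop :=
  exists D : set X, countable D /\ dense D.

Definition Delta_space (X : topologicalType) : Prop :=
  forall D : nat -> set X,
    (forall n, D n.+1 `<=` D n) -> \bigcap_n D n = set0 ->
    exists V : nat -> set X,
      (forall n, open (V n)) /\ (forall n, V n.+1 `<=` V n) /\
      (forall n, D n `<=` V n) /\ \bigcap_n V n = set0.

Definition cont_functional (R : realType) (E : normedModType R) (phi : E -> R)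
  : Prop :=
  (forall (a : R) (x y : E), phi (a *: x + y) = a * phi x + phi y) /\
  continuous phi.

Definition weakly_open (R : realType) (E : normedModType R) (W : set E) : Prop :=
  forall x, W x ->
    exists (n : nat) (phi : 'I_n -> E -> R) (e : R),
      0 < e /\ (forall i, cont_functional (phi i)) /\
      [set y | forall i, `|phi i y - phi i x| < e] `<=` W.

Definition weakly_compact (R : realType) (E : normedModType R) (K : set E) : Prop :=
  forall C : set (set E), (forall W, C W -> weakly_open W) ->
    K `<=` \bigcup_(W in C) W ->
    exists F : set (set E), finite_set F /\ F `<=` C /\ K `<=` \bigcup_(W in F) W.

Definition weak_homeomorphic (R : realType) (X : topologicalType)
  (E : normedModType R) (K : set E) : Prop :=
  exists f : X -> E,
    injective f /\ f @` setT = K /\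
    (forall W : set E, weakly_open W -> open (f @^-1` W)) /\
    (forall U : set X, open U -> exists W : set E, weakly_open W /\ f @` U = K `&` W).

Definition Eberlein_compact (X : topologicalType) : Prop :=
  exists (E : completeNormedModType Rdefinitions.R) (K : set E),
    weakly_compact K /\ weak_homeomorphic X K.

(* Main.v *)
Require Import Defs.
From HB Require Import structures.
From mathcomp Require Import all_boot all_order all_algebra.
From mathcomp Require Import all_classical all_reals all_analysis.
From mathcomp Require Import Rstruct Rstruct_topology.
From mathcomp Require Import zify lra.
Set Implicit Arguments. Unset Strict Implicit. Unset Printing Implicit Defensive.
Import Order.TTheory GRing.Theory Num.Theory.
Import numFieldNormedType.Exports.
Local Open Scope classical_set_scope.
Local Open Scope ring_scope.

Inductive pt := Inf | Nd of seq bool | Br of (nat -> bool).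
HB.instance Definition _ := gen_eqMixin pt.
HB.instance Definition _ := gen_choiceMixin pt.

Definition pre (x : nat -> bool) k : seq bool := mkseq x k.

Definition bad (xs : seq (nat -> bool)) (n : nat) (p : pt) : Prop :=
  (exists2 x, x \in xs & p = Br x) \/
  (exists s, p = Nd s /\ ((size s < n)%N \/ exists2 x, x \in xs & s = pre x (size s))).

Definition op (U : set pt) : Prop :=
  (forall x, U (Br x) -> exists n, forall k, (n <= k)%N -> U (Nd (pre x k))) /\
  (U Inf -> exists xs n, forall p, ~ U p -> bad xs n p).

Lemma opT : op setT.
Proof. split=> [x _|_]; first by exists 0%N. by exists [::], 0%N => p []. Qed.

Lemma bad_mono xs ys n m p : {subset xs <= ys} -> (n <= m)%N -> bad xs n p -> bad ys m p.
Proof.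
move=> sub nm [[x xin ->]|[s [-> H]]]; first by left; exists x => //; apply: sub.
right; exists s; split => //; case: H => [lt|[x xin e]]; first by left; apply: leq_trans nm.
by right; exists x => //; apply: sub.
Qed.

Lemma opI : setI_closed op.
Proof.
move=> A B [A1 A2] [B1 B2]; split.
  move=> x [/A1 [n1 H1] /B1 [n2 H2]]; exists (maxn n1 n2) => k le; split.
    by apply: H1; apply: leq_trans le; apply: leq_maxl.
  by apply: H2; apply: leq_trans le; apply: leq_maxr.
move=> [/A2 [xs1 [n1 H1]] /B2 [xs2 [n2 H2]]].
exists (xs1 ++ xs2), (maxn n1 n2) => p nI.
have [Ap|nAp] := pselect (A p); last first.
  by apply: bad_mono (H1 _ nAp) => [y yin|]; [rewrite mem_cat yin|apply: leq_maxl].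
have nBp : ~ B p by move=> Bp; apply: nI.
by apply: bad_mono (H2 _ nBp) => [y yin|]; [rewrite mem_cat yin orbT|apply: leq_maxr].
Qed.

Lemma op_bigU (I : Type) (f : I -> set pt) : (forall i, op (f i)) -> op (\bigcup_i f i).
Proof.
move=> fo; split.
  move=> x [i _ fi]; have [n Hn] := (fo i).1 _ fi.
  by exists n => k le; exists i => //; apply: Hn.
move=> [i _ fi]; have [xs [n Hn]] := (fo i).2 fi.
by exists xs, n => p np; apply: Hn => fp; apply: np; exists i.
Qed.

HB.instance Definition _ := isOpenTopological.Build pt opT opI op_bigU.

Lemma openP (U : set pt) : open U <-> op U.
Proof. by []. Qed.

Lemma nbhs_op (p : pt) (A : set pt) : nbhs p A -> exists U, [/\ op U, U p & U `<=` A].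
Proof. by rewrite nbhsE => -[U [oU Up] sUA]; exists U. Qed.

Lemma op_nbhs (p : pt) (U : set pt) : op U -> U p -> nbhs p U.
Proof. by move=> oU Up; apply: open_nbhs_nbhs; split. Qed.

Lemma size_pre x k : size (pre x k) = k. Proof. exact: size_mkseq. Qed.

Lemma pre_eq x y k j : pre x k = pre y k -> (j < k)%N -> x j = y j.
Proof.
move=> e jk; have := congr1 (fun s => nth false s j) e; by rewrite /pre !nth_mkseq.
Qed.

Lemma fun_neq (x y : nat -> bool) : x <> y -> exists j, x j <> y j.
Proof.
move=> nxy; apply: contrapT => nj; apply: nxy; apply: funext => j.
apply: contrapT => h; apply: nj; by exists j.
Qed.

Definition diag (xs : seq (nat -> bool)) : nat -> bool :=
  fun j => ~~ nth (fun _ => false) xs j j.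

Lemma diag_notin xs : diag xs \notin xs.
Proof.
apply/negP => /(nthP (fun _ => false)) [i _ e].
have h : diag xs i = ~~ nth (fun _ => false) xs i i by [].
by rewrite e in h; case: (diag xs i) h.
Qed.

Lemma br_notbad xs n y : y \notin xs -> ~ bad xs n (Br y).
Proof.
move=> yn [[x xin [e]]|[s [e _]]] //.
by move: yn; rewrite e xin.
Qed.

Lemma inf_br U : op U -> U Inf -> exists y, U (Br y).
Proof.
move=> [_ oI] /oI [xs [n H]]; exists (diag xs); apply: contrapT => nU.
exact: br_notbad (diag_notin xs) (H _ nU).
Qed.

Lemma br_nd U x : op U -> U (Br x) -> exists k, U (Nd (pre x k)).
Proof. move=> [oB _] /oB [n H]; exists n; exact: H. Qed.

Definition Vnd s : set pt := [set Nd s].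
Lemma op_Vnd s : op (Vnd s).
Proof. by split=> [x []|[]]. Qed.

Definition Vbr x n : set pt :=
  [set p | p = Br x \/ exists2 k, (n <= k)%N & p = Nd (pre x k)].
Lemma op_Vbr x n : op (Vbr x n).
Proof.
split.
- move=> y [e|[k _ e]] //; case: e => ->.
  by exists n => k nk; right; exists k.
- by case=> [//|[k _ //]].
Qed.

Lemma notin_pre (xs : seq (nat -> bool)) (y : nat -> bool) : y \notin xs ->
  exists m, forall k, (m <= k)%N -> forall x, x \in xs -> pre y k <> pre x k.
Proof.
elim: xs => [_|x xs IH]; first by exists 0%N.
rewrite in_cons negb_or => /andP [/eqP yx /IH [m Hm]].
have [j hj] := fun_neq yx.
exists (maxn m j.+1) => k le z; rewrite in_cons => /orP [/eqP ->|zin].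
  move=> e; apply: hj; apply: (pre_eq e); apply: leq_trans le; exact: leq_maxr.
apply: Hm zin; apply: leq_trans le; exact: leq_maxl.
Qed.

Definition Vinf xs n : set pt := [set p | ~ bad xs n p].
Lemma op_Vinf xs n : op (Vinf xs n).
Proof.
split.
- move=> y nb; have yn : y \notin xs.
    by apply/negP => yin; apply: nb; left; exists y.
  have [m Hm] := notin_pre yn; exists (maxn m n) => k le.
  move=> [[x _ //]|[s [e [lt|[x xin e2]]]]]; case: e => e; subst s.
  + by rewrite size_pre ltnNge (leq_trans (leq_maxr m n) le) in lt.
  + rewrite size_pre in e2; exact: (Hm k (leq_trans (leq_maxl m n) le) x xin e2).
- move=> _; exists xs, n => p; exact: contrapT.
Qed.

Lemma pt_separable : separable pt.
Proof.
exists (range Nd); split.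
  apply/countable_injP; exists (fun p => if p is Nd s then pickle s else 0%N).
  move=> a b /set_mem [s _ <-] /set_mem [t _ <-] /= e; congr Nd; exact: (pcan_inj (@pickleK _)) e.
move=> O [p Op] oO.
have [s Os] : exists s, O (Nd s).
  case: p Op => [|s|x] Op; [ | by exists s | ].
    have [y Oy] := inf_br oO Op; have [k Ok] := br_nd oO Oy; by exists (pre y k).
  have [k Ok] := br_nd oO Op; by exists (pre x k).
by exists (Nd s); split => //; exists s.
Qed.

Lemma pt_scattered : scattered pt.
Proof.
move=> A [p Ap].
have [[s As]|nN] := pselect (exists s, A (Nd s)).
  exists (Nd s); split => //; exists (Vnd s); split; first exact: op_Vnd.
  by apply/seteqP; split => [q [-> _]|q ->] //.
have [[x Ax]|nB] := pselect (exists x, A (Br x)).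
  exists (Br x); split => //; exists (Vbr x 0); split; first exact: op_Vbr.
  apply/seteqP; split => [q [[->|[k _ ->]] Aq]|q ->] //.
  - by exfalso; apply: nN; exists (pre x k).
  - by split=> //; left.
have pI : p = Inf.
  by case: p Ap => // [s As|x Ax]; [case: nN; exists s | case: nB; exists x].
subst p; exists Inf; split => //; exists setT; split; first exact: opT.
apply/seteqP; split => [q [_ Aq]|q ->] //.
by case: q Aq => // [s As|x Ax]; [case: nN; exists s | case: nB; exists x].
Qed.

Lemma sep_pts p q : p <> q ->
  exists U V, [/\ op U, op V, U p, V q & forall z, U z -> V z -> False].
Proof.
have sw : forall p q, (exists U V, [/\ op U, op V, U p, V q & forall z, U z -> V z -> False]) ->
    exists U V, [/\ op U, op V, U q, V p & forall z, U z -> V z -> False].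
  move=> a b [U [V [oU oV Ua Vb d]]]; exists V, U; split => // z Vz Uz; exact: d Uz Vz.
have IN s : exists U V, [/\ op U, op V, U Inf, V (Nd s) & forall z, U z -> V z -> False].
  exists (Vinf [::] (size s).+1), (Vnd s); split.
  - exact: op_Vinf.
  - exact: op_Vnd.
  - by move=> [[x //]|[t [//]]].
  - by [].
  - by move=> z nb zs; have ez : z = Nd s := zs; subst z; apply: nb; right; exists s; split => //; left.
have IB x : exists U V, [/\ op U, op V, U Inf, V (Br x) & forall z, U z -> V z -> False].
  exists (Vinf [:: x] 0), (Vbr x 0); split.
  - exact: op_Vinf.
  - exact: op_Vbr.
  - by move=> [[y //]|[t [//]]].
  - by left.
  - move=> z nb [zx|[k _ zk]]; subst z; apply: nb; first by left; exists x => //; rewrite inE.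
    right; exists (pre x k); split => //; right; exists x; first by rewrite inE.
    by rewrite size_pre.
have NB s x : exists U V, [/\ op U, op V, U (Nd s), V (Br x) & forall z, U z -> V z -> False].
  exists (Vnd s), (Vbr x (size s).+1); split.
  - exact: op_Vnd.
  - exact: op_Vbr.
  - by [].
  - by left.
  - move=> z -> [//|[k lt [e]]].
    by move: lt; rewrite e size_pre ltnn.
case: p => [|s|x]; case: q => [|t|y] npq.
- by case: npq.
- exact: IN.
- exact: IB.
- exact: sw (IN s).
- exists (Vnd s), (Vnd t); split; try exact: op_Vnd; try by [].
  by move=> z -> e; apply: npq; rewrite e.
- exact: NB.
- exact: sw (IB x).
- exact: sw (NB t x).
- have xy : x <> y by move=> e; apply: npq; rewrite e.
  have [j hj] := fun_neq xy.
  exists (Vbr x j.+1), (Vbr y j.+1); split; try exact: op_Vbr; try by left.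
  move=> z [->|[k lk ->]] [e|[k' lk' e]] //.

  + case: e => e.
    have kk : k = k' by rewrite -(size_pre x k) -(size_pre y k') e.
    subst k'; apply: hj; exact: pre_eq e lk.
Qed.

Lemma pt_hausdorff : hausdorff_space pt.
Proof.
move=> p q cl; apply: contrapT => npq.
have [U [V [oU oV Up Vq d]]] := sep_pts npq.
have [z [Uz Vz]] := cl U V (op_nbhs oU Up) (op_nbhs oV Vq).
exact: d Uz Vz.
Qed.

Definition S1 : set pt := [set p | p = Inf \/ exists x, p = Br x].

Lemma iso_eq (A U : set pt) x z : U `&` A = [set x] -> U z -> A z -> z = x.
Proof. by move=> e Uz Az; have : (U `&` A) z by []; rewrite e. Qed.

Lemma iso_mem (A U : set pt) x : U `&` A = [set x] -> U x.
Proof. by move=> e; have : [set x] x by []; rewrite -e => -[]. Qed.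

Lemma cb1 : @cb_deriv pt 1 = S1.
Proof.
apply/seteqP; split => p.
- move=> [_ niso]; case: p niso => [|s|x] niso; first by left.
  + exfalso; apply: niso; split => //; exists (Vnd s); split; first exact: op_Vnd.
    by apply/seteqP; split => [q [-> _]|q ->].
  + by right; exists x.
- move=> hp; split => // -[_ [U [oU e]]].
  have Up := iso_mem e.
  case: hp => [pI|[x px]]; subst p.
  + have [y Uy] := inf_br oU Up; by have := iso_eq e Uy I.
  + have [k Uk] := br_nd oU Up; by have := iso_eq e Uk I.
Qed.

Lemma cb2 : @cb_deriv pt 2 = [set Inf].
Proof.
change (derived (@cb_deriv pt 1) = [set Inf]); rewrite cb1.
apply/seteqP; split => p.
- move=> [hp niso]; case: hp => [//|[x px]]; subst p; exfalso; apply: niso.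
  split; first by right; exists x.
  exists (Vbr x 0); split; first exact: op_Vbr.
  apply/seteqP; split => [q [[->|[k _ ->]] hq]|q ->] //.
  + by case: hq => [//|[y //]].
  + by split; [left | right; exists x].
- move=> pI; have ep : p = Inf := pI; subst p; split; first by left.
  move=> [_ [U [oU e]]]; have Up := iso_mem e.
  have [y Uy] := inf_br oU Up.
  have : Br y = Inf by apply: iso_eq e Uy _; right; exists y.
  by [].
Qed.

Lemma cb3 : @cb_deriv pt 3 = set0.
Proof.
change (derived (@cb_deriv pt 2) = set0); rewrite cb2.
apply/seteqP; split => p // [pI niso]; have ep : p = Inf := pI; subst p.
apply: niso; split => //; exists setT; split; first exact: opT.
by apply/seteqP; split => q; [move=> [_ ->] | move=> ->; split].
Qed.

Lemma pt_height : scattered_height_eq pt 3.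
Proof.
split; first exact: cb3.
move=> [|[|[|m]]] // _.
- by move=> /seteqP [h _]; exact: (h Inf I).
- by rewrite cb1 => /seteqP [h _]; apply: (h Inf); left.
- by rewrite cb2 => /seteqP [h _]; exact: (h Inf erefl).
Qed.

Fixpoint seqs_upto n : seq (seq bool) :=
  if n is m.+1 then [::] :: map (cons true) (seqs_upto m) ++ map (cons false) (seqs_upto m)
  else [:: [::]].

Lemma seqs_uptoP s n : (size s <= n)%N -> s \in seqs_upto n.
Proof.
elim: s n => [|b s IH] [|n] //=; try by rewrite in_cons eqxx.
rewrite ltnS => /IH sin.
rewrite in_cons mem_cat; apply/orP; right; apply/orP.
by case: b; [left|right]; apply/mapP; exists s.
Qed.

Lemma filter_list (T : Type) (I : eqType) (F : set_system T) (FF : Filter F)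
  (l : seq I) (G : I -> set T) :
  (forall i, i \in l -> F (G i)) -> F [set q | forall i, i \in l -> G i q].
Proof.
elim: l => [_|i0 l IH H].
  by apply: filterS filterT => q _ i; rewrite in_nil.
have H0 : F (G i0) by apply: H; rewrite inE eqxx.
have Hl : F [set q | forall i, i \in l -> G i q].
  by apply: IH => i il; apply: H; rewrite in_cons il orbT.
apply: filterS (filterI H0 Hl) => q [g0 gl] i; rewrite in_cons => /orP [/eqP ->|il] //.
exact: gl.
Qed.

Lemma pt_compact : compact [set: pt].
Proof.
move=> F PF _.
apply: contrapT => ncl.
have NC p : exists AU : set pt * set pt,
    [/\ F AU.1, op AU.2, AU.2 p & forall z, AU.1 z -> AU.2 z -> False].
  apply: contrapT => h; apply: ncl; exists p; split => //.
  move=> A B FA /nbhs_op [U [oU Up sUB]].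
  apply: contrapT => nAB; apply: h; exists (A, U); split => // z Az Uz.
  by apply: nAB; exists z; split => //; exact: sUB.
have [g gP] := choice NC.
have [_ [_ oI] UI _] := gP Inf.
have [xs [n Hn]] := oI UI.
have Mx x : exists m, forall k, (m <= k)%N -> (g (Br x)).2 (Nd (pre x k)).
  by have [_ [oB _] UB _] := gP (Br x); exact: oB.
have [mx mxP] := choice Mx.
pose L := seqs_upto n ++ flatten [seq [seq pre x k | k <- iota 0 (mx x)] | x <- xs].
pose B := (g Inf).1 `&` ([set q | forall x, x \in xs -> (g (Br x)).1 q] `&`
   [set q | forall s, s \in L -> (g (Nd s)).1 q]).
have FB : F B.
  apply: filterI; first by have [] := gP Inf.
  apply: filterI; apply: filter_list => i _.
    by have [] := gP (Br i).
  by have [] := gP (Nd i).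
have [q [qI [qB qN]]] := filter_ex FB.
have nUq : ~ (g Inf).2 q by have [_ _ _ d] := gP Inf; exact: d qI.
have dN s : s \in L -> q = Nd s -> False.
  move=> sL qs; have [_ _ Us d] := gP (Nd s); apply: d (qN s sL) _; by rewrite qs.
have NinL s x : x \in xs -> (size s < mx x)%N -> s = pre x (size s) -> s \in L.
  move=> xin lt e; rewrite mem_cat; apply/orP; right; apply/flattenP.
  exists [seq pre x k | k <- iota 0 (mx x)]; first by apply: map_f.
  by rewrite e; apply: map_f; rewrite mem_iota add0n lt.
case: (Hn _ nUq) => [[x xin qx]|[s [qs [lt|[x xin e]]]]].
- subst q; have [_ _ U d] := gP (Br x); exact: d (qB x xin) U.
- apply: (dN s) qs; rewrite mem_cat seqs_uptoP //; exact: ltnW.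
- subst q; have [lt|le] := ltnP (size s) (mx x).
    exact: (dN s (NinL s x xin lt e) erefl).
  have [_ _ _ d] := gP (Br x); apply: d (qB x xin) _.
  by rewrite e; apply: mxP.
Qed.

Lemma pt_Delta : Delta_space pt.
Proof.
move=> D Ddec Dcap.
have Dmono n m : (n <= m)%N -> D m `<=` D n.
  move=> /subnK <-; elim: (m - n)%N => [|k IH]; first by rewrite add0n.
  by rewrite addSn => z /Ddec /IH.
have noz z N : (forall i, (N <= i)%N -> D i z) -> False.
  move=> H; have : (\bigcap_i D i) z.
    move=> i _; apply: (Dmono i (maxn N i)); first exact: leq_maxr.
    apply: H; exact: leq_maxl.
  by rewrite Dcap.
have [m nDm] : exists m, ~ D m Inf.
  apply: contrapT => h; apply: (noz Inf 0%N) => i _; apply: contrapT => ni.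
  by apply: h; exists i.
pose W n : set pt := [set p | (exists s, p = Nd s /\ D n (Nd s)) \/
   exists x, D n (Br x) /\ (p = Br x \/ exists2 k, (n < k)%N & p = Nd (pre x k))].
pose V n : set pt := if (n < m)%N then setT else W n.
have WI n : ~ W n Inf by move=> [[s [//]]|[x [_ [//|[k _ //]]]]].
exists V; split; [|split; [|split]].
- move=> n; rewrite /V; case: ifP => _; first exact: opT.
  split; last by move=> /WI.
  move=> y [[s [//]]|[x [Dx [e|[k _ //]]]]]; case: e => e; subst y.
  by exists n.+1 => k le; right; exists x; split => //; right; exists k.
- move=> n; rewrite /V; case: (ltnP n m) => h; first by [].
  have -> : (n.+1 < m)%N = false by apply/negbTE; rewrite -leqNgt; apply: leqW.
  move=> p [[s [-> Ds]]|[x [Dx H]]].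
    by left; exists s; split => //; apply: Ddec.
  right; exists x; split; first exact: Ddec.
  case: H => [->|[k lk ->]]; first by left.
  by right; exists k => //; apply: ltnW.
- move=> n p Dp; rewrite /V; case: ifP => h //.
  case: p Dp => [|s|x] Dp.
  + exfalso; apply: nDm; apply: (Dmono m n) => //; by rewrite leqNgt h.
  + by left; exists s.
  + by right; exists x; split => //; left.
- apply/seteqP; split => // p Vp; exfalso.
  have VW i : (m <= i)%N -> W i p.
    move=> le; have := Vp i I; rewrite /V; have -> : (i < m)%N = false.
      by apply/negbTE; rewrite -leqNgt.
    by [].
  case: p Vp VW => [|s|x] _ VW.
  + exact: WI (VW m (leqnn m)).
  + apply: (noz (Nd s) (maxn m (size s).+1)) => i le.
    have := VW i (leq_trans (leq_maxl _ _) le).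
    move=> [[t [[<-] //]]|[x [_ [//|[k lk [e]]]]]].
    have sk : size s = k by rewrite e size_pre.
    have h1 := leq_trans (leq_maxr m (size s).+1) le.
    by move: h1 lk; rewrite sk; lia.
  + apply: (noz (Br x) m) => i le.
    by have := VW i le => -[[s [//]]|[y [Dy [[->]|[k _ //]]]]].
Qed.

Section HBsec.
Context {R : realType} {E : normedModType R}.
Variable C : R.
Hypothesis C0 : 0 < C.
Let p (x : E) : R := C * `|x|.

Lemma p_add x y : p (x + y) <= p x + p y.
Proof. rewrite /p -mulrDr; apply: ler_wpM2l; [exact: ltW | exact: ler_normD]. Qed.

Lemma p_scale (t : R) x : 0 < t -> p (t *: x) = t * p x.
Proof. by move=> t0; rewrite /p normrZ gtr0_norm // mulrCA. Qed.

Lemma p_opp x : p (- x) = p x.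
Proof. by rewrite /p normrN. Qed.

Definition good (G : set (E * R)) :=
  [/\ (forall x a b, G (x, a) -> G (x, b) -> a = b),
      (forall r x y a b, G (x, a) -> G (y, b) -> G (r *: x + y, r * a + b)) &
      (forall x a, G (x, a) -> a <= p x)].

Lemma good_zero G u : good G -> G u -> G (0, 0).
Proof.
case=> _ lin _; case: u => x a Gu.
have := lin (-1) _ _ _ _ Gu Gu.
by rewrite scaleN1r addNr mulN1r addNr.
Qed.

Lemma good_scale G x a r : good G -> G (x, a) -> G (r *: x, r * a).
Proof.
move=> gG Gx; have G0 := good_zero gG Gx.
case: gG => _ lin _; have := lin r _ _ _ _ Gx G0.
by rewrite addr0 addr0.
Qed.

Lemma extend G y : good G -> G (0, 0) -> ~ (exists a, G (y, a)) ->
  exists c, good [set u | exists x a t, G (x, a) /\ u = (x + t *: y, a + t * c)].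
Proof.
move=> gG G00 ny.
have [fun_ lin dom] := gG.
pose S := [set v | exists x a, G (x, a) /\ v = a - p (x - y)].
have S0 : S !=set0 by exists (0 - p (0 - y)); exists 0, 0.
have Sub x' a' : G (x', a') -> ubound S (p (x' + y) - a').
  move=> Gx' _ [x [a [Gx ->]]].
  rewrite lerBlDr addrAC lerBrDl.
  have := dom _ _ (lin 1 _ _ _ _ Gx Gx').
  rewrite scale1r mul1r => h; rewrite [a' + a]addrC; apply: (le_trans h).
  have -> : x + x' = (x - y) + (x' + y) by rewrite addrCA subrK addrC.
  by rewrite [p (x' + y) + _]addrC; exact: p_add.
have hS : has_sup S by split => //; exists (p (0 + y) - 0); apply: Sub.
have cge x a : G (x, a) -> a - p (x - y) <= sup S.
  by move=> Gx; apply: sup_upper_bound => //; exists x, a.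
have cle x a : G (x, a) -> sup S <= p (x + y) - a.
  by move=> Gx; apply: ge_sup => //; apply: Sub.
set c := sup S.
exists c; split.
- move=> x0 a0 b0 [x [a [t [Gx [e1 e2]]]]] [x' [a' [t' [Gx' [e1' e2']]]]].
  subst a0 b0; have e : x + t *: y = x' + t' *: y by rewrite -e1 -e1'.
  have [tt|ntt] := eqVneq t t'.
    subst t'; have xx := addIr (t *: y) e; subst x'; by rewrite (fun_ _ _ _ Gx Gx').
  exfalso; apply: ny.
  have e3 : (t - t') *: y = -1 *: x + x'.
    by rewrite scalerBl scaleN1r; apply/eqP; rewrite subr_eq -addrA -e addKr.
  exists ((t - t')^-1 * (-1 * a + a')).
  have -> : y = (t - t')^-1 *: (-1 *: x + x').
    by rewrite -e3 scalerA mulVf ?scale1r // subr_eq0.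
  apply: good_scale => //; exact: lin.
- move=> r x1 x2 a1 a2 [u [b [t [Gu [-> ->]]]]] [u' [b' [t' [Gu' [-> ->]]]]].
  exists (r *: u + u'), (r * b + b'), (r * t + t'); split; first exact: lin.
  congr pair.
    by rewrite scalerDr scalerA scalerDl addrACA.
  by rewrite mulrDr mulrA mulrDl addrACA.
- move=> x0 a0 [u [b [t [Gu [-> ->]]]]].
  have [t0|t0|t0] := ltrgtP 0 t.
  + have h := cle _ _ (good_scale t^-1 gG Gu).
    have h2 := ler_wpM2l (ltW t0) h.
    have ee : t *: (t^-1 *: u + y) = u + t *: y.
      by rewrite scalerDr scalerA mulfV ?scale1r // gt_eqF.
    rewrite mulrBr -p_scale // ee mulrA mulfV ?mul1r ?gt_eqF // in h2.
    rewrite -/c in h2; lra.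
  + have s0 : 0 < - t by rewrite oppr_gt0.
    have h := cge _ _ (good_scale (- t)^-1 gG Gu).
    have h2 := ler_wpM2l (ltW s0) h.
    have ee : (- t) *: ((- t)^-1 *: u - y) = u + t *: y.
      by rewrite scalerBr scalerA mulfV ?scale1r ?scaleNr ?opprK // gt_eqF.
    rewrite mulrBr -p_scale // ee mulrA mulfV ?mul1r ?gt_eqF // in h2.
    rewrite -/c in h2; lra.
  + subst t; rewrite scale0r mul0r !addr0; exact: dom.
Qed.

Lemma hahn_banach (M : set E) (z : E) :
  M 0 -> (forall a x y, M x -> M y -> M (a *: x + y)) ->
  (forall m, M m -> C^-1 <= `|z - m|) ->
  exists phi : E -> R, [/\ (forall a x y, phi (a *: x + y) = a * phi x + phi y),
     (forall x, `|phi x| <= C * `|x|), (forall m, M m -> phi m = 0) & phi z = 1].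
Proof.
move=> M0 Mlin Mdist.
pose G0 : set (E * R) := [set u | exists m t, M m /\ u = (m + t *: z, t)].
have gG0 : good G0.
  split.
  - move=> x a b [m [t [Mm e]]] [m' [t' [Mm' e']]].
    case: e => ex ea; case: e' => ex' eb; subst a b.
    have e : m + t *: z = m' + t' *: z by rewrite -ex -ex'.
    have [//|ntt] := eqVneq t t'; exfalso.
    have e3 : (t - t') *: z = -1 *: m + m'.
      by rewrite scalerBl scaleN1r; apply/eqP; rewrite subr_eq -addrA -e addKr.
    have Mw : M ((t - t')^-1 *: (-1 *: m + m')).
      by have := Mlin (t - t')^-1 _ _ (Mlin (-1) _ _ Mm Mm') M0; rewrite addr0.
    have := Mdist _ Mw.
    rewrite -e3 scalerA mulVf ?scale1r ?subr_eq0 // subrr normr0.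
    by rewrite leNgt invr_gt0 C0.
  - move=> r x y a b [m [t [Mm e]]] [m' [t' [Mm' e']]].
    case: e => -> ->; case: e' => -> ->.
    exists (r *: m + m'), (r * t + t'); split; first exact: Mlin.
    congr pair.
    by rewrite scalerDr scalerA scalerDl addrACA.
  - move=> x a [m [t [Mm e]]]; case: e => -> ->.
    have [t0|t0] := ltrP 0 t; last first.
      apply: (le_trans t0); apply: mulr_ge0; [exact: ltW | exact: normr_ge0].
    have hM : M ((- t^-1) *: m) by have := Mlin (- t^-1) m 0 Mm M0; rewrite addr0.
    have h := Mdist _ hM.
    have ee : m + t *: z = t *: (z - (- t^-1) *: m).
      by rewrite scalerBr scalerA mulrN mulfV ?gt_eqF // scaleN1r opprK addrC.
    rewrite /p ee normrZ gtr0_norm // mulrCA.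
    rewrite -[t in t <= _]mulr1 ler_pM2l //.
    by have := ler_wpM2l (ltW C0) h; rewrite mulfV ?gt_eqF.
pose P : set (set (E * R)) := [set G | good G /\ (G = set0 \/ G0 `<=` G)].
have [A [[gA A0] Amax]] : exists A, P A /\ forall B, A `<` B -> ~ P B.
  apply: Zorn_bigcup => F FP Ftot.
  have pick2 u v : (\bigcup_(X in F) X) u -> (\bigcup_(X in F) X) v ->
      exists G, [/\ F G, G u & G v].
    move=> [G1 F1 u1] [G2 F2 v2]; case: (Ftot _ _ F1 F2) => s.
      by exists G2; split => //; exact: s.
    by exists G1; split => //; exact: s.
  split.
    split.
    - move=> x a b ua ub; have [G [FG Ga Gb]] := pick2 _ _ ua ub.
      by have [[f _ _] _] := FP G FG; exact: f Ga Gb.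
    - move=> r x y a b ua ub; have [G [FG Ga Gb]] := pick2 _ _ ua ub.
      by exists G => //; have [[_ l _] _] := FP G FG; exact: l.
    - by move=> x a [G FG Ga]; have [[_ _ d] _] := FP G FG; exact: d.
  have [[G [FG sG]]|nex] := pselect (exists G, F G /\ G0 `<=` G).
    by right => u G0u; exists G => //; exact: sG.
  left; apply/seteqP; split => // u [G FG Gu].
  case: (FP G FG).2 => [G0e|sub]; first by rewrite G0e in Gu.
  by exfalso; apply: nex; exists G.
have G0A : G0 `<=` A.
  case: A0 => // A0; exfalso; apply: (Amax G0); last by split => //; right.
  rewrite A0; split => // h; have : G0 (0, 0).
    by exists 0, 0; split => //; rewrite scale0r addr0.
  by move/h.
have A00 : A (0, 0) by apply: G0A; exists 0, 0; split => //; rewrite scale0r addr0.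
have tot y : exists a, A (y, a).
  apply: contrapT => ny; have [c gc] := extend gA A00 ny.
  apply: (Amax [set u | exists x a t, A (x, a) /\ u = (x + t *: y, a + t * c)]).
    split.
      move=> [x a] Axa; exists x, a, 0; split => //.
      by rewrite scale0r mul0r !addr0.
    move=> h; apply: ny; exists c; apply: h; exists 0, 0, 1; split => //.
    by rewrite scale1r mul1r !add0r.
  split => //; right => u /G0A Au; exists u.1, u.2, 0; split; first by case: u Au.
  by rewrite scale0r mul0r !addr0; case: u {Au}.
have [phi phiP] := choice tot.
have [f l d] := gA.
exists phi; split.
- move=> a x y; apply: f (phiP _) _; exact: l.
- move=> x; rewrite ler_norml; apply/andP; split; last exact: d.
  have := d _ _ (good_scale (-1) gA (phiP x)).
  by rewrite scaleN1r mulN1r p_opp lerNl.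
- move=> m Mm; apply: f (phiP m) _; apply: G0A; exists m, 0; split => //.
  by rewrite scale0r addr0.
- apply: f (phiP z) _; apply: G0A; exists 0, 1; split => //.
  by rewrite scale1r add0r.
Qed.

End HBsec.

Section NE.
Context {R : realType} {E : normedModType R}.

Definition Msum (f : pt -> E) (l : seq (R * seq bool)) : E :=
  \sum_(q <- l) q.1 *: f (Nd q.2).
Definition Mq (f : pt -> E) (l : seq (rat * seq bool)) : E :=
  \sum_(q <- l) (ratr q.1 : R) *: f (Nd q.2).

Lemma approx_rat f l (eps : R) : 0 < eps -> exists l', `|Msum f l - Mq f l'| < eps.
Proof.
elim: l eps => [|[r s] l IH] eps e0.
  by exists [::]; rewrite /Msum /Mq !big_nil subrr normr0.
have e2 : 0 < eps / 2 by rewrite divr_gt0.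
have [l' Hl'] := IH _ e2.
set a := `|f (Nd s)|.
have a0 : 0 <= a := normr_ge0 _.
have a1 : 0 < a + 1 by lra.
set dl := eps / 2 / (a + 1).
have dl0 : 0 < dl by rewrite divr_gt0.
have [q] := @rat_in_itvoo R (r - dl) (r + dl) ltac:(lra).
rewrite in_itv /= => /andP [h1 h2].
exists ((q, s) :: l'); rewrite /Msum /Mq !big_cons /= -/(Msum f l) -/(Mq f l').
have -> : r *: f (Nd s) + Msum f l - (ratr q *: f (Nd s) + Mq f l') =
    (r - ratr q) *: f (Nd s) + (Msum f l - Mq f l').
  by rewrite scalerBl opprD addrACA.
apply: le_lt_trans (ler_normD _ _) _; rewrite normrZ -/a.
have hq : `|r - ratr q| < dl by rewrite ltr_distlC; apply/andP; split; lra.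
have hA : `|r - ratr q| * a <= dl * a by apply: ler_wpM2r => //; exact: ltW.
have hB : dl * a < dl * (a + 1) by rewrite ltr_pM2l //; lra.
have hC : dl * (a + 1) = eps / 2 by rewrite /dl divfK // gt_eqF.
lra.
Qed.

Lemma weak_open_nbhs (W : set E) z : weakly_open W -> W z -> nbhs z W.
Proof.
move=> wo Wz; have [n [phi [e [e0 [cf sub]]]]] := wo z Wz.
apply: (@filterS _ (nbhs z) _ _ _ sub); apply: filter_forall => i.
exact: (@cvgr_distC_lt _ _ _ (nbhs z) _ (phi i) (phi i z) ((cf i).2 z) e e0).
Qed.

Lemma lin0 (phi : E -> R) : (forall a x y, phi (a *: x + y) = a * phi x + phi y) -> phi 0 = 0.
Proof.
move=> l; have := l 1 0 0; rewrite scale1r addr0 mul1r => h.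
by apply: (addrI (phi 0)); rewrite addr0 -h.
Qed.

Lemma cont_of_bound (phi : E -> R) (C : R) : 0 < C ->
  (forall a x y, phi (a *: x + y) = a * phi x + phi y) ->
  (forall x, `|phi x| <= C * `|x|) -> cont_functional phi.
Proof.
move=> C0 l b; split => // x; apply/cvgrPdist_lt => eps e0.
apply/nbhs_normP; exists (eps / C); first by rewrite /= divr_gt0.
move=> t /= xt.
have -> : phi x - phi t = phi ((-1) *: t + x) by rewrite l mulN1r addrC.
apply: le_lt_trans (b _) _.
rewrite scaleN1r addrC -ltr_pdivlMl //.
by rewrite mulrC.
Qed.

Lemma cantor (h : (nat -> bool) -> nat) : injective h -> False.
Proof.
move=> hinj.
have gex k : exists y : nat -> bool, (exists x, h x = k) -> h y = k.
  have [[x hx]|nx] := pselect (exists x, h x = k); first by exists x.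
  by exists (fun _ => false) => ex; case: nx.
have [g gP] := choice gex.
pose d : nat -> bool := fun k => ~~ g k k.
have e : g (h d) = d by apply: hinj; apply: gP; exists d.
have : d (h d) = ~~ g (h d) (h d) by [].
by rewrite e; case: (d (h d)).
Qed.

Lemma Msum_lin f a l1 l2 :
  a *: Msum f l1 + Msum f l2 = Msum f ([seq (a * q.1, q.2) | q <- l1] ++ l2).
Proof.
rewrite /Msum big_cat big_map scaler_sumr; congr (_ + _).
by apply: eq_bigr => q _ /=; rewrite scalerA.
Qed.

Lemma not_weak_homeo (K : set E) : ~ @weak_homeomorphic R pt E K.
Proof.
move=> [f [finj [fK [Hcont Hopen]]]].
have Dx x : exists dl : R, 0 < dl /\ forall y, `|f (Br x) - f (Br y)| < dl -> y = x.
  have [W [wo eW]] := Hopen _ (op_Vbr x 0).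
  have Wfx : W (f (Br x)).
    have : (f @` Vbr x 0) (f (Br x)) by exists (Br x) => //; left.
    by rewrite eW => -[].
  have /nbhs_normP [dl dl0 sub] := weak_open_nbhs wo Wfx.
  exists dl; split => // y hy.
  have Wy : W (f (Br y)) := sub _ hy.
  have Ky : K (f (Br y)) by rewrite -fK; exists (Br y).
  have : (K `&` W) (f (Br y)) by [].
  rewrite -eW => -[q Vq fq]; have qy := finj _ _ fq; subst q.
  by case: Vq => [[]|[k _ //]].
have Dn x (eps : R) : 0 < eps -> exists l, `|f (Br x) - Msum f l| < eps.
  move=> e0; apply: contrapT => nd.
  pose M := [set m | exists l, m = Msum f l].
  have Md m : M m -> (eps^-1)^-1 <= `|f (Br x) - m|.
    move=> [l ->]; rewrite invrK leNgt; apply/negP => h; apply: nd; by exists l.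
  have M0 : M 0 by exists [::]; rewrite /Msum big_nil.
  have Ml a u v : M u -> M v -> M (a *: u + v).
    by move=> [l1 ->] [l2 ->]; exists ([seq (a * q.1, q.2) | q <- l1] ++ l2); exact: Msum_lin.
  have C0 : 0 < eps^-1 by rewrite invr_gt0.
  have [phi [l b Mz phiz]] := hahn_banach C0 M0 Ml Md.
  have cf := cont_of_bound C0 l b.
  pose W := [set v | 2^-1 < phi v].
  have wo : weakly_open W.
    move=> w Ww; exists 1%N, (fun _ => phi), (phi w - 2^-1); split.
      by rewrite subr_gt0.
    split => // v /(_ ord0); rewrite ltr_distlC => /andP [h1 h2].
    rewrite /W /=; lra.
  have oW : op (f @^-1` W) := Hcont W wo.
  have Wx : (f @^-1` W) (Br x) by rewrite /= /W /= phiz; lra.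
  have [k Wk] := br_nd oW Wx.
  have : phi (f (Nd (pre x k))) = 0.
    apply: Mz; exists [:: ((1 : R), pre x k)].
    by rewrite /Msum big_seq1 /= scale1r.
  move=> h2.
  have h1 : 2^-1 < phi (f (Nd (pre x k))) := Wk.
  rewrite h2 in h1.
  have h3 : (0 : R) < 2^-1 by rewrite invr_gt0.
  by have := lt_trans h1 h3; rewrite ltxx.
have [dl dlP] := choice Dx.
have G x : exists kl : nat * seq (rat * seq bool),
    `|f (Br x) - Mq f kl.2| < (kl.1.+1%:R)^-1 /\ 2 * (kl.1.+1%:R)^-1 < dl x.
  have [d0 _] := dlP x.
  have hb := @archi_boundP R (2 / dl x) (ltW (divr_gt0 (ltr0Sn R 1) d0)).
  set k := Num.Def.archi_bound _ in hb.
  set Kk : R := k.+1%:R.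
  have K0 : 0 < Kk by rewrite ltr0Sn.
  have kK : k%:R < Kk by rewrite /Kk ltr_nat.
  have i0 : 0 < Kk^-1 by rewrite invr_gt0.
  have i2 : 0 < Kk^-1 / 2 by rewrite divr_gt0.
  have [l hl] := Dn x _ i2.
  have [l' hl'] := approx_rat f l i2.
  exists (k, l'); split => /=.
    apply: le_lt_trans (ler_distD (Msum f l) _ _) _; rewrite -/Kk; set ik := Kk^-1 in hl hl' *; lra.
  have h1 : 2 / dl x < Kk by apply: lt_trans kK.
  rewrite ltr_pdivrMr // in h1.
  rewrite -/Kk; have -> : 2 * Kk^-1 = 2 / Kk by [].
  by rewrite ltr_pdivrMr // mulrC.
have [g gP] := choice G.
apply: (@cantor (fun x => pickle (g x))) => x y /(pcan_inj (@pickleK _)) gxy.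
have [hx kx] := gP x; have [hy _] := gP y.
rewrite gxy in hx kx.
have [_ dx] := dlP x; symmetry; apply: dx.
apply: le_lt_trans (ler_distD (Mq f (g y).2) _ _) _.
rewrite (distrC (Mq _ _)).
set ik := (_.+1%:R)^-1 in hx kx hy.
lra.
Qed.

End NE.

Local Close Scope ring_scope.

Theorem theorem3p10 :
  exists X : topologicalType,
    separable X /\ scattered X /\ compact [set: X] /\ hausdorff_space X /\
    scattered_height_eq X 3 /\ Delta_space X /\ ~ Eberlein_compact X.
Proof.
exists pt; split; first exact: pt_separable.
split; first exact: pt_scattered.
split; first exact: pt_compact.
split; first exact: pt_hausdorff.
split; first exact: pt_height.
split; first exact: pt_Delta.
by move=> [E [K [_ wh]]]; exact: not_weak_homeo wh.
Qed.
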